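(* Let $\ell\in(\Sigma^S_{n,2d})^*$ and let $W_\ell\subseteq H_{n,d}$ be the kernel of the quadratic form $Q_\ell$. Then $\ell$ spans an extreme ray of $(\Sigma^S_{n,2d})^*$ if and only if $W_\ell^{<2>}$ is a (linear) hyperplane in $H^S_{n,2d}$.
   Context: $H_{n,d}$ is the space of real forms of degree $d$ in $n$ variables and $H^S_{n,2d}$ the symmetric forms of degree $2d$; $\Sigma^S_{n,2d}$ is the cone of symmetric sums of squares of real forms and $(\Sigma^S_{n,2d})^*=\{\ell\in (H^S_{n,2d})^*:\ell(f)\ge 0\ \forall f\in\Sigma^S_{n,2d}\}$. $\operatorname{Sym}(f)=\frac1{n!}\sum_{\sigma\in\mathcal{S}_n}\sigma(f)$ with $\mathcal{S}_n$ permuting variables. $Q_\ell(f)=\ell(\operatorname{Sym}(f^2))$ for $f\in H_{n,d}$; its kernel is $\{p\in H_{n,d}:\ell(\operatorname{Sym}(pq))=0\ \forall q\in H_{n,d}\}$. For a linear subspace $W\subseteq H_{n,d}$, $W^{<2>}=\{\operatorname{Sym}(\sum_i f_ig_i): f_i\in W,\ g_i\in H_{n,d}\}\subseteq H^S_{n,2d}$. *)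

(* Defs.v *)
From mathcomp Require Import all_boot all_fingroup all_algebra.
From mathcomp Require Import reals.
From mathcomp Require Import mpoly.

Set Implicit Arguments.
Unset Strict Implicit.
Unset Printing Implicit Defensive.

Import GRing.Theory Num.Theory.
Local Open Scope ring_scope.

Definition Hform (n : nat) (R : realType) (k : nat) (p : {mpoly R[n]}) : Prop :=
  p \is k.-homog.

Definition HSform (n : nat) (R : realType) (k : nat) (p : {mpoly R[n]}) : Prop :=
  p \is k.-homog /\ p \is symmetric.

Definition Sym (n : nat) (R : realType) (p : {mpoly R[n]}) : {mpoly R[n]} :=
  (n`!%:R)^-1 *: \sum_(s : 'S_n) msym s p.

Definition symSOS (n : nat) (R : realType) (d : nat) (f : {mpoly R[n]}) : Prop :=
  HSform (d.*2) f /\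
  exists s : seq {mpoly R[n]},
    (forall g, g \in s -> Hform d g) /\ f = \sum_(g <- s) g ^+ 2.

(* l is linear on the subspace S (elements of S^* are represented by
   functions on the ambient space, only their restriction to S matters). *)
Definition lin_on (n : nat) (R : realType) (S : {mpoly R[n]} -> Prop)
  (l : {mpoly R[n]} -> R) : Prop :=
  forall (a : R) p q, S p -> S q -> l (a *: p + q) = a * l p + l q.

Definition dual_symSOS (n : nat) (R : realType) (d : nat)
  (l : {mpoly R[n]} -> R) : Prop :=
  lin_on (@HSform n R d.*2) l /\ forall f, symSOS d f -> 0 <= l f.

Definition extreme_ray_dual (n : nat) (R : realType) (d : nat)
  (l : {mpoly R[n]} -> R) : Prop :=
  dual_symSOS d l /\
  (exists f, HSform d.*2 f /\ l f <> 0) /\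
  forall l1 l2 : {mpoly R[n]} -> R,
    dual_symSOS d l1 -> dual_symSOS d l2 ->
    (forall f, HSform d.*2 f -> l f = l1 f + l2 f) ->
    exists c : R, 0 <= c /\ forall f, HSform d.*2 f -> l1 f = c * l f.

(* W_l: the kernel of Q_l(f) = l(Sym(f^2)) on H_{n,d}. *)
Definition kerQ (n : nat) (R : realType) (d : nat)
  (l : {mpoly R[n]} -> R) (p : {mpoly R[n]}) : Prop :=
  Hform d p /\ forall q, Hform d q -> l (Sym (p * q)) = 0.

Definition W2 (n : nat) (R : realType) (d : nat)
  (W : {mpoly R[n]} -> Prop) (f : {mpoly R[n]}) : Prop :=
  exists (k : nat) (fs gs : 'I_k -> {mpoly R[n]}),
    (forall i, W (fs i)) /\ (forall i, Hform d (gs i)) /\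
    f = Sym (\sum_(i < k) fs i * gs i).

Definition hyperplane_in (n : nat) (R : realType)
  (S V : {mpoly R[n]} -> Prop) : Prop :=
  (forall f, V f -> S f) /\ V 0 /\
  (forall (a : R) p q, V p -> V q -> V (a *: p + q)) /\
  exists h, S h /\ ~ V h /\
    forall f, S f -> exists (c : R) w, V w /\ f = w + c *: h.

(* Main.v *)
Require Import Defs.
From mathcomp Require Import all_boot all_order all_fingroup all_algebra.
From mathcomp Require Import reals.
From mathcomp Require Import mpoly.
From mathcomp Require Import ring lra.
From Stdlib Require Import ClassicalEpsilon Classical.
Set Implicit Arguments. Unset Strict Implicit. Unset Printing Implicit Defensive.
Import GRing.Theory Num.Theory Order.TTheory.
Local Open Scope ring_scope.
Local Notation Sym := Defs.Sym.


Lemma arithG (R : realFieldType) (C' D b P T f g w : R) : 0 <= C' -> 0 <= D -> 0 < b -> 0 <= P ->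
  f <= C' * P -> g^+2 <= D * P ->
  f + 2 * T * g + T^+2 * w <= (C' + D / b + 1 + (w^+2 + 1) / b) * (P + T^+2 * b).
Proof.
move=> C0 D0 b0 P0 hf hg.
have bi : 0 < b^-1 by rewrite invr_gt0.
have hb : b * b^-1 = 1 by rewrite divff // gt_eqF.
have h1 : 2 * T * g <= T^+2 * b + D * P / b.
{ have h : 0 <= (T * b - g)^+2 by apply: sqr_ge0.
  have h2 : 2 * T * g * b <= T^+2 * b * b + g^+2 by nra.
  have h3 : 2 * T * g <= T^+2 * b + g^+2 / b.
  { rewrite -(ler_pM2r b0) [X in _ <= X]mulrDl divfK ?gt_eqF //. }
  apply: (le_trans h3). by rewrite lerD2l ler_pM2r. }
have h2 : T^+2 * w <= (w^+2 + 1) / b * (T^+2 * b).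
{ have -> : (w^+2 + 1) / b * (T^+2 * b) = (w^+2+1) * T^+2.
  { field. by rewrite gt_eqF. }
  have := sqr_ge0 T. nra. }
have e1 : 0 <= D / b * (T^+2 * b) by apply: mulr_ge0; [apply: mulr_ge0 => //; exact: ltW|apply: mulr_ge0 => //; [exact: sqr_ge0|exact: ltW]].
have e2 : 0 <= (w^+2+1) / b * P by apply: mulr_ge0 => //; apply: mulr_ge0; [nra|exact: ltW].
have e3 : 0 <= C' * (T^+2 * b) by apply: mulr_ge0 => //; apply: mulr_ge0; [exact: sqr_ge0|exact: ltW].
have e4 : D * P / b = D / b * P by rewrite mulrAC.
rewrite e4 in h1.
have : (C' + D / b + 1 + (w ^+ 2 + 1) / b) * (P + T ^+ 2 * b) =
  C' * P + D / b * P + T^+2 * b + (w^+2+1)/b * (T^+2 * b) + (C' * (T^+2 * b) + D / b * (T^+2 * b) + (w^+2+1)/b * P + P) by ring.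
move=> ->. lra.
Qed.

Lemma arithF (R : realFieldType) (D b P T a c : R) : 0 <= D -> 0 < b -> 0 <= P ->
  c^+2 <= D * P -> (T * a + c)^+2 <= (2 * D + 2 * a^+2 / b) * (P + T^+2 * b).
Proof.
move=> D0 b0 P0 hc.
have -> : (2 * D + 2 * a^+2 / b) * (P + T^+2 * b) =
   2 * (D * P) + 2 * D * (T^+2 * b) + 2 * (a^+2 / b * P) + 2 * (T * a)^+2.
{ field. by rewrite gt_eqF. }
have e1 : 0 <= D * (T^+2 * b) by apply: mulr_ge0 => //; apply: mulr_ge0; [exact: sqr_ge0|exact: ltW].
have e2 : 0 <= a^+2 / b * P by apply: mulr_ge0 => //; apply: mulr_ge0; [exact: sqr_ge0|rewrite invr_ge0; exact: ltW].
have e3 : (T * a + c)^+2 <= 2 * (T * a)^+2 + 2 * c^+2.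
{ have := sqr_ge0 (T * a - c). nra. }
nra.
Qed.

Section Abstract.
Variables (R : realFieldType) (M : lmodType R).

Fixpoint spanP (s : seq M) (x : M) : Prop :=
  match s with
  | [::] => x = 0
  | v :: s' => exists t y, spanP s' y /\ x = t *: v + y
  end.

Definition subsp (V : M -> Prop) :=
  V 0 /\ forall (a : R) x y, V x -> V y -> V (a *: x + y).

Definition allin (V : M -> Prop) (s : seq M) := forall v, v \in s -> V v.

Lemma allin_cons V v s : allin V (v :: s) -> V v /\ allin V s.
Proof. by move=> H; split=> [|u Hu]; apply: H; rewrite inE ?eqxx // Hu orbT. Qed.

Lemma spanP_sub V s x : subsp V -> allin V s -> spanP s x -> V x.
Proof.
move=> [V0 VZ]; elim: s x => [|v s IH] x /= Hs; first by move->.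
have [Vv Vs] := allin_cons Hs.
by move=> [t [y [Hy ->]]]; apply: VZ => //; apply: IH.
Qed.

Lemma spanP_sum (I : Type) (r : seq I) (F : I -> R) (G : I -> M) :
  spanP (map G r) (\sum_(i <- r) F i *: G i).
Proof.
elim: r => [|i r IH] /=; first by rewrite big_nil.
by rewrite big_cons; exists (F i), (\sum_(j <- r) F j *: G j).
Qed.

Lemma subspN V x : subsp V -> V x -> V (- x).
Proof. by move=> [V0 VZ] Vx; rewrite -[- x]addr0 -scaleN1r; apply: VZ. Qed.

Lemma subspD V x y : subsp V -> V x -> V y -> V (x + y).
Proof. by move=> [V0 VZ] Vx Vy; rewrite -[x]scale1r; apply: VZ. Qed.

Lemma subspZ V a x : subsp V -> V x -> V (a *: x).
Proof. by move=> [V0 VZ] Vx; rewrite -[a *: x]addr0; apply: VZ. Qed.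

Definition linon (V : M -> Prop) (phi : M -> R) :=
  forall a x y, V x -> V y -> phi (a *: x + y) = a * phi x + phi y.

Lemma linon0 V phi : subsp V -> linon V phi -> phi 0 = 0.
Proof.
move=> [V0 _] H; have := H 1 0 0 V0 V0; rewrite scale1r addr0 mul1r.
by move=> h; apply: (addrI (phi 0)); rewrite addr0 -h.
Qed.

Definition bilin (V : M -> Prop) (B : M -> M -> R) :=
  (forall a x y z, V x -> V y -> V z -> B (a *: x + y) z = a * B x z + B y z) /\
  (forall x y, V x -> V y -> B x y = B y x).

Variables (V : M -> Prop) (HV : subsp V).

Lemma bilin_r B : bilin V B -> forall a x y z, V x -> V y -> V z ->
  B z (a *: x + y) = a * B z x + B z y.
Proof.
move=> [Bl Bs] a x y z Vx Vy Vz.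
have Vxy : V (a *: x + y) by case: HV => _ H; apply: H.
by rewrite Bs // Bl // (Bs x) // (Bs y).
Qed.

Lemma quadE B : bilin V B -> forall t x y, V x -> V y ->
  B (t *: y + x) (t *: y + x) = B x x + 2 * t * B x y + t ^+ 2 * B y y.
Proof.
move=> HB t x y Vx Vy; have [Bl Bs] := HB.
have Vtyx : V (t *: y + x) by case: HV => _ H; apply: H.
rewrite Bl // !(bilin_r HB) // (Bs y x) //. ring.
Qed.

Definition psd (B : M -> M -> R) := forall x, V x -> 0 <= B x x.

Lemma kerPSD B : bilin V B -> psd B -> forall p q, V p -> V q -> B p p = 0 -> B p q = 0.
Proof.
move=> HB Hp p q Vp Vq Hpp.
set b := B p q; set c := B q q.
have c0 : 0 <= c by apply: Hp.
set t := - b / (c + 1).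
have Vt : V (t *: q + p) by case: HV => _ H; apply: H.
have := Hp _ Vt; rewrite quadE // Hpp -/b -/c add0r.
have e1 : 0 < c + 1 by lra.
rewrite /t => H.
have H2 : 0 <= (2 * (- b / (c + 1)) * b + (- b / (c + 1)) ^+ 2 * c) * (c + 1)^+2.
{ apply: mulr_ge0 => //; exact: sqr_ge0. }
have E : (2 * (- b / (c + 1)) * b + (- b / (c + 1)) ^+ 2 * c) * (c + 1)^+2 = - (b^+2 * (c + 2)).
{ field. by rewrite gt_eqF. }
rewrite E in H2.
have : b ^+ 2 * (c + 2) <= 0 by lra.
have : 0 <= b^+2 by apply: sqr_ge0.
move=> h1 h2. have : b ^+ 2 = 0 by nra.
by move/eqP; rewrite sqrf_eq0 => /eqP.
Qed.

Lemma bilin0 B : bilin V B -> forall z, V z -> B 0 z = 0.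
Proof.
move=> [Bl _] z Vz; have [V0 _] := HV.
have := Bl 1 0 0 z V0 V0 Vz; rewrite scale1r addr0 mul1r.
by move=> h; apply: (addrI (B 0 z)); rewrite addr0 -h.
Qed.

Variable B : M -> M -> R.
Hypotheses (HB : bilin V B) (HP : psd B).

Definition proj v x := x - (B x v / B v v) *: v.

Lemma proj_V v x : V v -> V x -> V (proj v x).
Proof. move=> Vv Vx; rewrite /proj addrC -scaleNr; case: HV => _ H; exact: H. Qed.

Lemma proj_lin v a x y : V v -> V x -> V y ->
  proj v (a *: x + y) = a *: proj v x + proj v y.
Proof.
move=> Vv Vx Vy; have [Bl _] := HB.
rewrite /proj Bl // mulrDl scalerDl scalerBr scalerA mulrA opprD addrACA. by [].
Qed.

Lemma proj_v v : V v -> B v v != 0 -> proj v v = 0.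
Proof. by move=> Vv H; rewrite /proj divff // scale1r subrr. Qed.

Lemma proj_span v s y : V v -> allin V s -> spanP s y -> spanP (map (proj v) s) (proj v y).
Proof.
move=> Vv; elim: s y => [|u r IHr] y Hs /=.
  by move->; rewrite /proj bilin0 // mul0r scale0r subrr.
have [Vu Vr] := allin_cons Hs.
move=> [t [z [Hz ->]]]; have Vz := spanP_sub HV Vr Hz.
exists t, (proj v z); split; first exact: IHr.
exact: proj_lin.
Qed.

Lemma proj_cons v s x : V v -> B v v != 0 -> allin V s -> spanP (v :: s) x ->
  spanP (map (proj v) s) (proj v x).
Proof.
move=> Vv Hv Vs [t [y [Hy ->]]]; have Vy := spanP_sub HV Vs Hy.
rewrite proj_lin // proj_v // scaler0 add0r; exact: proj_span.
Qed.

Lemma proj_orth v x : V v -> V x -> B v v != 0 -> B (proj v x) v = 0.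
Proof.
move=> Vv Vx Hv; have [Bl _] := HB.
by rewrite /proj addrC -scaleNr Bl // mulNr divfK // addNr.
Qed.

Lemma proj_dec v x : x = (B x v / B v v) *: v + proj v x.
Proof. by rewrite /proj addrC subrK. Qed.


Lemma phi_bound (phi : M -> R) : linon V phi ->
  (forall p, V p -> B p p = 0 -> phi p = 0) ->
  forall s, allin V s ->
  exists D, 0 <= D /\ forall x, spanP s x -> phi x ^+ 2 <= D * B x x.
Proof.
move=> Hl Hk s; move Hk': (size s) => k; elim: k s Hk' => [|k IH] [|v s] //= Hsz Hs.
- exists 0; split => // x ->; rewrite (linon0 HV Hl) expr0n /= mul0r. by [].
- case: Hsz => Hsz. have [Vv Vs] := allin_cons Hs.
  have [Bl Bs] := HB.
  have [V0 VZ] := HV.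
  have Bvv0 := HP Vv.
  have [Hvv|Hvv] := eqVneq (B v v) 0.
  + have [D [D0 HD]] := IH s Hsz Vs. exists D; split => // x [t [y [Hy ->]]].
    have Vy := spanP_sub HV Vs Hy.
    have Hvy : B y v = 0 by rewrite Bs //; exact: (kerPSD HB HP Vv Vy Hvv).
    rewrite quadE // Hvy Hvv mulr0 mulr0 !addr0.
    rewrite Hl // Hk // mulr0 add0r. exact: HD.
  + have bpos : 0 < B v v by rewrite lt_def Hvv Bvv0.
    have Vs' : allin V (map (proj v) s).
    { move=> u /mapP [w Hw ->]; apply: proj_V => //; exact: Vs. }
    have [D [D0 HD]] := IH (map (proj v) s) (etrans (size_map _ _) Hsz) Vs'.
    exists (2 * D + 2 * phi v ^+ 2 / B v v); split.
    { apply: addr_ge0; first by apply: mulr_ge0.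
      apply: mulr_ge0; first by apply: mulr_ge0 => //; exact: sqr_ge0.
      rewrite invr_ge0; exact: ltW. }
    move=> x Hx.
    have Vx : V x := spanP_sub HV Hs Hx.
    have Hpx := proj_cons Vv Hvv Vs Hx.
    have Vpx := proj_V Vv Vx.
    have Hpv := proj_orth Vv Vx Hvv.
    set tau := B x v / B v v.
    have Ex : x = tau *: v + proj v x := proj_dec v x.
    have Bxx : forall z, z = tau *: v + proj v x -> B z z = B (proj v x) (proj v x) + tau ^+ 2 * B v v.
    { by move=> z ->; rewrite quadE // Hpv mulr0 addr0. }
    have phix : forall z, z = tau *: v + proj v x -> phi z = tau * phi v + phi (proj v x).
    { by move=> z ->; rewrite Hl. }
    rewrite (Bxx x Ex) (phix x Ex).
    apply: arithF => //; [exact: HP | exact: HD].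
Qed.

Lemma quad_bound (B' : M -> M -> R) : bilin V B' ->
  (forall p, V p -> (forall q, V q -> B p q = 0) -> forall q, V q -> B' p q = 0) ->
  forall s, allin V s ->
  exists C, 0 <= C /\ forall x, spanP s x -> B' x x <= C * B x x.
Proof.
move=> HB' Hk s; move Hk': (size s) => k; elim: k s Hk' => [|k IH] [|v s] //= Hsz Hs.
- exists 0; split => // x ->; have [V0 _] := HV; by rewrite (bilin0 HB') ?mul0r.
- case: Hsz => Hsz. have [Vv Vs] := allin_cons Hs.
  have [Bl Bs] := HB. have [Bl' Bs'] := HB'.
  have [V0 VZ] := HV.
  have Bvv0 := HP Vv.
  have [Hvv|Hvv] := eqVneq (B v v) 0.
  + have [C [C0 HC]] := IH s Hsz Vs. exists C; split => // x [t [y [Hy ->]]].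
    have Vy := spanP_sub HV Vs Hy.
    have Hvy : B y v = 0 by rewrite Bs //; exact: (kerPSD HB HP Vv Vy Hvv).
    have Hv' : forall q, V q -> B' v q = 0.
    { apply: Hk => // q Vq; exact: (kerPSD HB HP Vv Vq Hvv). }
    rewrite (quadE HB) // Hvy Hvv mulr0 mulr0 !addr0.
    rewrite (quadE HB') // Bs' // !Hv' // mulr0 mulr0 !addr0. exact: HC.
  + have bpos : 0 < B v v by rewrite lt_def Hvv Bvv0.
    have Vs' : allin V (map (proj v) s).
    { move=> u /mapP [w Hw ->]; apply: proj_V => //; exact: Vs. }
    have [C [C0 HC]] := IH (map (proj v) s) (etrans (size_map _ _) Hsz) Vs'.
    have Hphil : linon V (fun z => B' z v).
    { move=> a x y Vx Vy; exact: Bl'. }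
    have Hphik : forall p, V p -> B p p = 0 -> B' p v = 0.
    { move=> p Vp Hpp; apply: Hk => // q Vq; exact: (kerPSD HB HP Vp Vq Hpp). }
    have [D [D0 HD]] := phi_bound Hphil Hphik Vs'.
    exists (C + D / B v v + 1 + (B' v v ^+ 2 + 1) / B v v); split.
    { have bi : 0 <= (B v v)^-1 by rewrite invr_ge0; exact: ltW.
      apply: addr_ge0; last by apply: mulr_ge0 => //; apply: addr_ge0 => //; exact: sqr_ge0.
      apply: addr_ge0 => //; apply: addr_ge0 => //; exact: mulr_ge0. }
    move=> x Hx.
    have Vx : V x := spanP_sub HV Hs Hx.
    have Hpx := proj_cons Vv Hvv Vs Hx.
    have Vpx := proj_V Vv Vx.
    have Hpv := proj_orth Vv Vx Hvv.
    set tau := B x v / B v v.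
    have Ex : x = tau *: v + proj v x := proj_dec v x.
    have Bxx : forall z, z = tau *: v + proj v x -> B z z = B (proj v x) (proj v x) + tau ^+ 2 * B v v.
    { by move=> z ->; rewrite quadE // Hpv mulr0 addr0. }
    have B'xx : forall z, z = tau *: v + proj v x -> B' z z = B' (proj v x) (proj v x) + 2 * tau * B' (proj v x) v + tau ^+ 2 * B' v v.
    { by move=> z ->; rewrite quadE. }
    rewrite (Bxx x Ex) (B'xx x Ex).
    apply: arithG => //; [exact: HP | exact: HC | exact: HD].
Qed.

End Abstract.

Section Ext.
Variables (R : realFieldType) (M : lmodType R).

Lemma ext_sub (s : seq M) : forall (W : M -> Prop) g, subsp W -> ~ W g ->
  exists W' : M -> Prop, subsp W' /\ (forall x, W x -> W' x) /\ ~ W' g /\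
    forall v, v \in s -> exists w t, W' w /\ v = w + t *: g.
Proof.
elim: s => [|v s IH] W g HW Hg.
  by exists W; split=> //; split=> //; split.
case: (classic (exists w t, W w /\ v = w + t *: g)) => Hv.
- have [W' [HW' [sub [Hg' Hs]]]] := IH W g HW Hg.
  exists W'; split=> //; split=> //; split=> // u; rewrite inE => /orP [/eqP ->|Hu].
  + by move: Hv => [w [t [Hw ->]]]; exists w, t; split=> //; apply: sub.
  + exact: Hs.
- pose W1 x := exists w t, W w /\ x = w + t *: v.
  have HW1 : subsp W1.
  { have [W0 WZ] := HW. split.
    - by exists 0, 0; split=> //; rewrite scale0r addr0.
    - move=> a x y [w1 [t1 [H1 ->]]] [w2 [t2 [H2 ->]]].
      exists (a *: w1 + w2), (a * t1 + t2); split; first exact: WZ.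
      rewrite scalerDr scalerDl scalerA addrACA. by []. }
  have sub1 : forall x, W x -> W1 x.
  { by move=> x Hx; exists x, 0; rewrite scale0r addr0. }
  have Hg1 : ~ W1 g.
  { move=> [w [t [Hw Eg]]].
    have [t0|t0] := eqVneq t 0.
    - by apply: Hg; rewrite Eg t0 scale0r addr0.
    - apply: Hv; exists (- t^-1 *: w), t^-1; split; first by apply: subspZ.
      rewrite Eg scalerDr scalerA mulVf // scale1r scaleNr addrA addNr add0r. by []. }
  have [W' [HW' [sub [Hg' Hs]]]] := IH W1 g HW1 Hg1.
  exists W'; split=> //; split; first by move=> x /sub1 /sub.
  split=> // u; rewrite inE => /orP [/eqP ->|Hu]; last exact: Hs.
  exists v, 0; rewrite scale0r addr0; split=> //; apply: sub.
  exists 0, 1; rewrite scale1r add0r; split=> //; by case: HW.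
Qed.

Lemma sep_functional (V W : M -> Prop) (s : seq M) g :
  subsp W -> (forall x, V x -> spanP s x) -> ~ W g ->
  exists phi : M -> R, linon V phi /\ (forall w, W w -> phi w = 0) /\ phi g = 1.
Proof.
move=> HW HVs Hg.
have [W' [HW' [sub [Hg' Hs]]]] := ext_sub s HW Hg.
have [W0 WZ] := HW'.
pose U x := exists w t, W' w /\ x = w + t *: g.
have HsU : forall x, spanP s x -> U x.
{ elim: s Hs {HVs} => [|v r IHr] Hs x /=.
  - by move->; exists 0, 0; rewrite scale0r addr0.
  - move=> [t [y [Hy ->]]].
    have [w1 [t1 [H1 ->]]] : U v by apply: Hs; rewrite inE eqxx.
    have [w2 [t2 [H2 ->]]] : U y.
    { apply: IHr => // u Hu; apply: Hs; by rewrite inE Hu orbT. }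
    exists (t *: w1 + w2), (t * t1 + t2); split; first exact: WZ.
    by rewrite scalerDr scalerDl scalerA addrACA. }
have uniq : forall x t1 t2, W' (x - t1 *: g) -> W' (x - t2 *: g) -> t1 = t2.
{ move=> x t1 t2 H1 H2.
  have H3 : W' ((t1 - t2) *: g).
  { have -> : (t1 - t2) *: g = (x - t2 *: g) - (x - t1 *: g).
    { by rewrite scalerBl opprB [RHS]addrC [RHS]addrA subrK. }
    apply: subspD => //; exact: subspN. }
  have [//|Hne0] := eqVneq t1 t2; exfalso. have Hne : t1 - t2 != 0 by rewrite subr_eq0.
  apply: Hg'; have -> : g = (t1 - t2)^-1 *: ((t1 - t2) *: g) by rewrite scalerA mulVf // scale1r.
  exact: subspZ. }
pose phi x := epsilon (inhabits (0 : R)) (fun t => W' (x - t *: g)).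
have phiP : forall x, U x -> W' (x - phi x *: g).
{ move=> x [w [t [Hw Ex]]]; apply: (epsilon_spec (inhabits (0 : R)) (fun t => W' (x - t *: g))).
  by exists t; rewrite Ex addrK. }
exists phi; split; [|split].
- move=> a x y Vx Vy.
  have Ux := HsU _ (HVs _ Vx); have Uy := HsU _ (HVs _ Vy).
  have Uxy : U (a *: x + y).
  { move: Ux Uy => [w1 [t1 [H1 ->]]] [w2 [t2 [H2 ->]]].
    exists (a *: w1 + w2), (a * t1 + t2); split; first exact: WZ.
    by rewrite scalerDr scalerDl scalerA addrACA. }
  apply: (uniq (a *: x + y)); first exact: phiP.
  have -> : a *: x + y - (a * phi x + phi y) *: g = a *: (x - phi x *: g) + (y - phi y *: g).
  { by rewrite scalerDl scalerBr scalerA opprD addrACA. }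
  by apply: WZ; apply: phiP.
- move=> w Hw; apply: (uniq w); first (apply: phiP; exists w, 0; split; [exact: sub| by rewrite scale0r addr0]).
  by rewrite scale0r subr0; apply: sub.
- apply: (uniq g); first (apply: phiP; exists 0, 1; split=> //; by rewrite scale1r add0r).
  by rewrite scale1r subrr.
Qed.
End Ext.


Section Poly.
Variables (n : nat) (R : realType).
Local Notation P := {mpoly R[n]}.

Lemma msym_homog k s (p : P) : p \is k.-homog -> msym s p \is k.-homog.
Proof.
move/dhomogP => H; apply/dhomogP => m; rewrite mcoeff_msupp mcoeff_sym -mcoeff_msupp => /H.
move=> <-; exact: (esym (mdeg_mperm _ _)).
Qed.

Lemma SymZD a (p q : P) : Sym (a *: p + q) = a *: Sym p + Sym q.
Proof.
rewrite /Defs.Sym. under eq_bigr do rewrite msymD msymZ.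
by rewrite big_split /= -scaler_sumr scalerDr !scalerA mulrC.
Qed.

Lemma Sym0 : Sym (0 : P) = 0.
Proof. by rewrite /Defs.Sym big1 ?scaler0 // => s _; rewrite msym0. Qed.

Lemma SymD (p q : P) : Sym (p + q) = Sym p + Sym q.
Proof. by have := SymZD 1 p q; rewrite !scale1r. Qed.

Lemma SymZ a (p : P) : Sym (a *: p) = a *: Sym p.
Proof. by rewrite -[a *: p]addr0 SymZD Sym0 addr0. Qed.

Lemma Sym_sum (I : Type) (r : seq I) (Pr : pred I) (F : I -> P) :
  Sym (\sum_(i <- r | Pr i) F i) = \sum_(i <- r | Pr i) Sym (F i).
Proof. elim/big_rec2: _ => [|i y1 y2 _ <-]; [exact: Sym0 | exact: SymD]. Qed.

Lemma Sym_homog k (p : P) : p \is k.-homog -> Sym p \is k.-homog.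
Proof.
move=> H; rewrite /Defs.Sym; apply: rpredZ; apply: rpred_sum => s _; exact: msym_homog.
Qed.

Lemma Sym_sym (p : P) : Sym p \is symmetric.
Proof.
apply/issymP => t; rewrite /Defs.Sym msymZ.
have -> : msym t (\sum_s msym s p) = \sum_s msym t (msym s p).
{ elim/big_rec2: _ => [|i y1 y2 _ <-]; [exact: msym0 | exact: msymD]. }
congr (_ *: _).
under eq_bigr do rewrite -msymMm.
by rewrite [RHS](reindex_inj (mulIg t)).
Qed.

Lemma Sym_id (p : P) : p \is symmetric -> Sym p = p.
Proof.
move/issymP => H; rewrite /Defs.Sym (eq_bigr (fun _ => p)) //.
rewrite sumr_const card_Sn -scaler_nat scalerA mulVf ?scale1r //.
by rewrite pnatr_eq0 -lt0n fact_gt0.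
Qed.

Lemma HS_subsp k : subsp (@HSform n R k).
Proof.
split; first by split; [exact: dhomog0 | exact: rpred0].
move=> a x y [Hx Sx] [Hy Sy]; split.
- by apply: rpredD => //; apply: rpredZ.
- by apply: rpredD => //; apply: rpredZ.
Qed.

Lemma H_subsp k : subsp (@Hform n R k).
Proof.
split; first exact: dhomog0.
by move=> a x y Hx Hy; apply: rpredD => //; apply: rpredZ.
Qed.

Lemma Sym_HS k (p : P) : Hform k p -> HSform k (Sym p).
Proof. by move=> H; split; [exact: Sym_homog | exact: Sym_sym]. Qed.

Lemma SymM_HS d (p q : P) : Hform d p -> Hform d q -> HSform d.*2 (Sym (p * q)).
Proof. by move=> Hp Hq; apply: Sym_HS; rewrite /Hform -addnn; apply: dhomogM. Qed.


Definition mons (k : nat) : seq 'X_{1..n} :=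
  [seq s2m t | t : k.-tuple 'I_n <- enum (basis n k)].

Lemma mons_deg k m : (mdeg m == k) = (m \in mons k).
Proof. exact: basis_cover. Qed.

Lemma mons_uniq k : uniq (mons k).
Proof. exact: uniq_basis. Qed.

Lemma homog_expand k (p : P) : p \is k.-homog -> p = \sum_(m <- mons k) p@_m *: 'X_[m].
Proof.
move=> H; apply/mpolyP => m'; rewrite raddf_sum /=.
case: (boolP (m' \in mons k)) => Hm.
- rewrite (bigD1_seq m') ?mons_uniq //= mcoeffZ mcoeffX eqxx mulr1 big1 ?addr0 // => m'' ne.
  by rewrite mcoeffZ mcoeffX (negbTE ne) mulr0.
- rewrite big_seq big1 /=.
  + apply: (dhomog_nemf_coeff H); by rewrite /= mons_deg.
  + move=> m'' Hm''; rewrite mcoeffZ mcoeffX; case: eqP => [e|_]; last by rewrite mulr0.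
    by rewrite -e Hm'' in Hm.
Qed.

Definition monl k : seq P := map (fun m => 'X_[m]) (mons k).

Lemma homog_span k (p : P) : p \is k.-homog -> spanP (monl k) p.
Proof. by move=> H; rewrite {1}(homog_expand H); exact: spanP_sum. Qed.

Lemma monl_allin k : allin (@Hform n R k) (monl k).
Proof. by move=> v /mapP [m Hm ->]; rewrite /Hform dhomogX /= mons_deg. Qed.

Lemma mdeg_s2m (t : seq 'I_n) : mdeg (s2m t) = size t.
Proof.
rewrite mdegE (eq_bigr (fun i => count_mem i t)); last by move=> i _; rewrite mnmE.
transitivity (\sum_i \sum_(j <- t | j == i) 1)%N.
  by apply: eq_bigr => i _; rewrite -big_filter sum1_size size_filter.
rewrite (exchange_big_dep predT)//=.
transitivity (\sum_(j <- t) 1)%N; last by rewrite sum1_size.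
by apply: eq_bigr => i _; rewrite (eq_bigl _ _ (eq_sym _)) big_pred1_eq.
Qed.

Lemma s2m_cat (a b : seq 'I_n) : s2m (a ++ b) = (s2m a + s2m b)%MM.
Proof. by apply/mnmP => i; rewrite mnmDE !mnmE count_cat. Qed.

Definition spl1 d (m : 'X_{1..n}) := s2m (take d (m2s m)).
Definition spl2 d (m : 'X_{1..n}) := s2m (drop d (m2s m)).

Lemma spl_prop d m : mdeg m = d.*2 ->
  [/\ (spl1 d m + spl2 d m)%MM = m, mdeg (spl1 d m) = d & mdeg (spl2 d m) = d].
Proof.
move=> Hm; have Hs : size (m2s m) = d.*2 by rewrite size_m2s.
split.
- by rewrite /spl1 /spl2 -s2m_cat cat_take_drop s2mK.
- by rewrite /spl1 mdeg_s2m size_takel // Hs -addnn leq_addr.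
- by rewrite /spl2 mdeg_s2m size_drop Hs -addnn addnK.
Qed.

Lemma HS_prod d (f : P) : HSform d.*2 f ->
  exists k (fs gs : 'I_k -> P), (forall i, Hform d (fs i)) /\ (forall i, Hform d (gs i)) /\
    f = Sym (\sum_(i < k) fs i * gs i).
Proof.
move=> [Hh Hsym].
pose ms := mons d.*2.
have Hms : forall i : 'I_(size ms), mdeg (nth 0%MM ms i) = d.*2.
{ by move=> i; apply/eqP; rewrite mons_deg mem_nth. }
exists (size ms), (fun i => f@_(nth 0%MM ms i) *: 'X_[spl1 d (nth 0%MM ms i)]),
  (fun i => 'X_[spl2 d (nth 0%MM ms i)]).
split; [|split].
- move=> i; apply: rpredZ; rewrite /Hform dhomogX /=.
  by have [_ -> _] := spl_prop (Hms i).
- move=> i; rewrite /Hform dhomogX /=.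
  by have [_ _ ->] := spl_prop (Hms i).
- rewrite -{1}(Sym_id Hsym); congr Sym.
  rewrite {1}(homog_expand Hh) (big_nth 0%MM) big_mkord.
  apply: eq_bigr => i _.
  have [E _ _] := spl_prop (Hms i).
  by rewrite -scalerAl -mpolyXD E.
Qed.

End Poly.


Section Lin.
Variables (R : realFieldType) (M : lmodType R) (S : M -> Prop) (HS : subsp S) (l : M -> R) (Hl : linon S l).

Lemma linZ a x : S x -> l (a *: x) = a * l x.
Proof.
move=> Sx; have [S0 _] := HS.
by rewrite -[a *: x]addr0 Hl // (linon0 HS Hl) addr0.
Qed.

Lemma linD x y : S x -> S y -> l (x + y) = l x + l y.
Proof. by move=> Sx Sy; have := Hl 1 Sx Sy; rewrite scale1r mul1r. Qed.

Lemma lin_sum (I : Type) (r : seq I) (Pr : pred I) (F : I -> M) :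
  (forall i, Pr i -> S (F i)) -> l (\sum_(i <- r | Pr i) F i) = \sum_(i <- r | Pr i) l (F i).
Proof.
move=> HF; elim: r => [|i r IH]; first by rewrite !big_nil (linon0 HS Hl).
rewrite !big_cons; case: ifP => Pi //.
have Ssum : S (\sum_(j <- r | Pr j) F j).
{ elim/big_rec: _ => [|j y Pj Sy]; first by case: HS. apply: subspD => //; exact: HF. }
by rewrite linD ?IH //; apply: HF.
Qed.
End Lin.

Section Main.
Variables (n : nat) (R : realType) (d : nat).
Local Notation P := {mpoly R[n]}.

Definition Bf (l : P -> R) (p q : P) := l (Sym (p * q)).

Lemma Bf_bilin l : lin_on (@HSform n R d.*2) l -> bilin (@Hform n R d) (Bf l).
Proof.
move=> Hl; split.
- move=> a x y z Hx Hy Hz; rewrite /Bf mulrDl -scalerAl SymZD Hl //; exact: SymM_HS.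
- by move=> x y _ _; rewrite /Bf mulrC.
Qed.

Lemma Qpsd l : dual_symSOS d l -> psd (@Hform n R d) (Bf l).
Proof.
move=> [Hlin Hpos] x Hx; rewrite /Bf.
pose F := \sum_(s : 'S_n) (msym s x) ^+ 2.
have EF : F = n`!%:R *: Sym (x * x).
{ rewrite /F /Defs.Sym scalerA divff ?scale1r; last by rewrite pnatr_eq0 -lt0n fact_gt0.
  by apply: eq_bigr => s _; rewrite msymM expr2. }
have HF : symSOS d F.
{ split; first by rewrite EF; apply: subspZ; [exact: HS_subsp | exact: SymM_HS].
  exists [seq msym s x | s <- enum 'S_n]; split.
  - by move=> g /mapP [s _ ->]; exact: msym_homog.
  - by rewrite big_map big_enum. }
have := Hpos _ HF; rewrite EF (linZ (@HS_subsp n R d.*2)) //; last exact: SymM_HS.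
by rewrite pmulr_rge0 // ltr0n fact_gt0.
Qed.

Lemma Qdual l : lin_on (@HSform n R d.*2) l ->
  (forall x, Hform d x -> 0 <= l (Sym (x * x))) -> forall f, symSOS d f -> 0 <= l f.
Proof.
move=> Hlin Hq f [[Hh Hsym] [s [Hs Ef]]].
rewrite -(Sym_id Hsym) Ef Sym_sum big_seq_cond.
rewrite (lin_sum (@HS_subsp n R d.*2) Hlin).
  by apply: sumr_ge0 => g /andP [Hg _]; rewrite expr2; apply: Hq; apply: Hs.
by move=> g /andP [Hg _]; rewrite expr2; apply: SymM_HS; apply: Hs.
Qed.


Lemma W2_HS (l : P -> R) (f : P) : W2 d (kerQ d l) f -> HSform d.*2 f.
Proof.
move=> [k [fs [gs [Hf [Hg ->]]]]]; apply: Sym_HS; rewrite /Hform -addnn.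
by apply: rpred_sum => i _; apply: dhomogM; [exact: (proj1 (Hf i)) | exact: Hg].
Qed.

Lemma W2_subsp (l : P -> R) : subsp (W2 d (kerQ d l)).
Proof.
split.
- exists 0%N, (fun _ => 0), (fun _ => 0); split; first by move=> [m Hm].
  split; first by move=> [m Hm].
  by rewrite big_ord0 Sym0.
- move=> a x y [k1 [f1 [g1 [Hf1 [Hg1 ->]]]]] [k2 [f2 [g2 [Hf2 [Hg2 ->]]]]].
  exists (k1 + k2)%N,
    (fun i => match split i with inl j => f1 j | inr j => f2 j end),
    (fun i => match split i with inl j => a *: g1 j | inr j => g2 j end).
  split; [|split].
  + by move=> i; case: (split i).
  + move=> i; case: (split i) => j //; apply: rpredZ; exact: Hg1.
  + rewrite -SymZ -SymD; congr Sym.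
    rewrite big_split_ord /= scaler_sumr; congr (_ + _); apply: eq_bigr => j _.
    * by rewrite (unsplitK (inl j) : split (lshift k2 j) = inl j) scalerAr.
    * by rewrite (unsplitK (inr j) : split (rshift k1 j) = inr j).
Qed.

Lemma W2_l0 (l l' : P -> R) (f : P) : lin_on (@HSform n R d.*2) l' ->
  (forall p q, kerQ d l p -> Hform d q -> l' (Sym (p * q)) = 0) ->
  W2 d (kerQ d l) f -> l' f = 0.
Proof.
move=> Hl' H0 [k [fs [gs [Hf [Hg ->]]]]].
rewrite Sym_sum (lin_sum (@HS_subsp n R d.*2) Hl').
  by rewrite big1 // => i _; apply: H0.
move=> i _; apply: SymM_HS; [exact: (proj1 (Hf i)) | exact: Hg].
Qed.

Lemma kerQ_W2 (l : P -> R) (p q : P) : kerQ d l p -> Hform d q -> W2 d (kerQ d l) (Sym (p * q)).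
Proof.
move=> Hp Hq; exists 1%N, (fun _ => p), (fun _ => q); split=> //; split=> //.
by rewrite big_ord1.
Qed.

End Main.

Theorem corollary6p6 (n : nat) (R : realType) (d : nat)
  (l : {mpoly R[n]} -> R) :
  dual_symSOS d l ->
  (extreme_ray_dual d l <->
   hyperplane_in (@HSform n R d.*2) (W2 d (kerQ d l))).
Proof.
move=> Hl; have [Hlin Hpos] := Hl.
have HSs := @HS_subsp n R d.*2.
have Hs := @H_subsp n R d.
have HB := Bf_bilin Hlin.
have HP := Qpsd Hl.
have Wl0 : forall f, W2 d (kerQ d l) f -> l f = 0.
{ move=> f; apply: W2_l0 => // p q [_ Hp] Hq; exact: Hp. }
split.
- move=> [_ [[f0 [Hf0 lf0]] Hext]].
  have lf0' : l f0 != 0 by apply/eqP.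
  split; first exact: W2_HS.
  have [W0 WZ] := W2_subsp d l.
  split=> //; split=> //.
  exists f0; split=> //; split; first by move/Wl0.
  move=> f Hf; exists (l f / l f0), (f - (l f / l f0) *: f0); split; last by rewrite subrK.
  set w := f - _.
  have Hw : HSform d.*2 w by rewrite /w addrC -scaleNr; case: HSs => _ H; apply: H.
  have lw : l w = 0.
  { by rewrite /w addrC -scaleNr Hlin // mulNr divfK // addNr. }
  apply: NNPP => Hnw.
  have [phi [Hphi [Hphi0 Hphiw]]] := sep_functional (@W2_subsp n R d l)
     (fun x (Hx : HSform d.*2 x) => homog_span (proj1 Hx)) Hnw.
  have Hker : forall (l' : {mpoly R[n]} -> R), (forall x, W2 d (kerQ d l) x -> l' x = 0) ->
     forall p, Hform d p -> (forall q, Hform d q -> Bf l p q = 0) ->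
     forall q, Hform d q -> Bf l' p q = 0.
  { move=> l' H0 p Hp Hpq q Hq; apply: H0; apply: kerQ_W2 => //. }
  have Hmphi : lin_on (@HSform n R d.*2) (fun f => - phi f).
  { move=> a x y Hx Hy; rewrite Hphi //; ring. }
  have [C1 [C1p HC1]] := quad_bound Hs HB HP (Bf_bilin Hphi) (Hker _ Hphi0) (@monl_allin n R d).
  have Hmphi0 : forall x, W2 d (kerQ d l) x -> - phi x = 0 by move=> x Hx; rewrite Hphi0 ?oppr0.
  have [C2 [C2p HC2]] := quad_bound Hs HB HP (Bf_bilin Hmphi) (Hker _ Hmphi0) (@monl_allin n R d).
  set eps := (C1 + C2 + 1)^-1.
  have Cpos : 0 < C1 + C2 + 1 by lra.
  have epos : 0 < eps by rewrite invr_gt0.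
  have e1 : eps * (C1 + C2 + 1) = 1 by rewrite mulVf // gt_eqF.
  pose l1 f := (l f + eps * phi f) / 2.
  pose l2 f := (l f - eps * phi f) / 2.
  have Hl1 : dual_symSOS d l1.
  { have Hlin1 : lin_on (@HSform n R d.*2) l1.
    { move=> a x y Hx Hy; rewrite /l1 Hlin // Hphi //; ring. }
    split=> //; apply: Qdual => // x Hx.
    have q0 := HP x Hx; rewrite /Bf in q0.
    have h2 := HC2 x (homog_span Hx); rewrite /Bf in h2.
    rewrite /l1.
    set Q := l (Sym (x * x)) in q0 h2 *; set ph := phi (Sym (x * x)) in h2 *.
    have s1 : eps * (- ph) <= eps * (C2 * Q) by rewrite ler_pM2l.
    have s2a : C2 * Q <= (C1 + C2 + 1) * Q by apply: ler_wpM2r => //; lra.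
    have s2 : eps * (C2 * Q) <= Q.
    { by rewrite -{2}[Q]mul1r -e1 -mulrA ler_pM2l. }
    have : 0 <= Q + eps * ph by lra.
    move=> h; apply: mulr_ge0 => //; rewrite invr_ge0; lra. }
  have Hl2 : dual_symSOS d l2.
  { have Hlin2 : lin_on (@HSform n R d.*2) l2.
    { move=> a x y Hx Hy; rewrite /l2 Hlin // Hphi //; ring. }
    split=> //; apply: Qdual => // x Hx.
    have q0 := HP x Hx; rewrite /Bf in q0.
    have h1 := HC1 x (homog_span Hx); rewrite /Bf in h1.
    rewrite /l2.
    set Q := l (Sym (x * x)) in q0 h1 *; set ph := phi (Sym (x * x)) in h1 *.
    have s1 : eps * ph <= eps * (C1 * Q) by rewrite ler_pM2l.
    have s2a : C1 * Q <= (C1 + C2 + 1) * Q by apply: ler_wpM2r => //; lra.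
    have s2 : eps * (C1 * Q) <= Q.
    { by rewrite -{2}[Q]mul1r -e1 -mulrA ler_pM2l. }
    have : 0 <= Q - eps * ph by lra.
    move=> h; apply: mulr_ge0 => //; rewrite invr_ge0; lra. }
  have Hsum : forall g, HSform d.*2 g -> l g = l1 g + l2 g.
  { move=> g _; rewrite /l1 /l2; by field. }
  have [c [_ Hc]] := Hext l1 l2 Hl1 Hl2 Hsum.
  have := Hc w Hw; rewrite /l1 lw Hphiw mulr0 add0r mulr1 => E.
  have : eps / 2 > 0 by apply: divr_gt0.
  by rewrite E lt_irreflexive.
- move=> [Wsub [W0 [WZ [h [Hh [nWh Hdec]]]]]].
  have Hlh : l h <> 0.
  { move=> lh0.
    have l0 : forall f, HSform d.*2 f -> l f = 0.
    { move=> f Hf; have [c [w [Hw ->]]] := Hdec f Hf.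
      rewrite addrC Hlin //; last exact: Wsub.
      by rewrite lh0 (Wl0 _ Hw) mulr0 addr0. }
    apply: nWh. have [k [fs [gs [Hf [Hg E]]]]] := HS_prod Hh.
    exists k, fs, gs; split; last by split.
    move=> i; split; first exact: Hf.
    move=> q Hq; apply: l0; exact: SymM_HS. }
  have Hlh' : l h != 0 by apply/eqP.
  split=> //; split; first by exists h.
  move=> l1 l2 Hl1 Hl2 Hsum.
  have [Hlin1 _] := Hl1.
  have HP1 := Qpsd Hl1. have HP2 := Qpsd Hl2.
  have Q1le : forall x, Hform d x -> Bf l1 x x <= Bf l x x.
  { move=> x Hx; rewrite /Bf (Hsum _ (SymM_HS Hx Hx)) lerDl; exact: HP2. }
  have l1W : forall f, W2 d (kerQ d l) f -> l1 f = 0.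
  { move=> f; apply: W2_l0 => // p q [Hp Hpq] Hq.
    have Q1 : Bf l1 p p = 0.
    { apply/eqP; rewrite eq_le HP1 // andbT; have := Q1le p Hp; by rewrite {2}/Bf Hpq. }
    exact: (kerPSD Hs (Bf_bilin Hlin1) HP1 Hp Hq Q1). }
  have Hc : forall f, HSform d.*2 f -> l1 f = l1 h / l h * l f.
  { move=> f Hf; have [c [w [Hw ->]]] := Hdec f Hf.
    have Hw' := Wsub _ Hw.
    rewrite addrC Hlin // Hlin1 // (Wl0 _ Hw) (l1W _ Hw) !addr0; by field. }
  exists (l1 h / l h); split => //.
  have [x [Hx Qx]] : exists x, Hform d x /\ 0 < Bf l x x.
  { apply: NNPP => Hn. apply: Hlh.
    have kerall : forall p, Hform d p -> kerQ d l p.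
    { move=> p Hp; split=> // q Hq; apply: (kerPSD Hs HB HP Hp Hq).
      apply/eqP; rewrite eq_le HP // andbT leNgt; apply/negP => H; apply: Hn; by exists p. }
    apply: Wl0. have [k [fs [gs [Hf [Hg E]]]]] := HS_prod Hh.
    exists k, fs, gs; split=> // i; exact: kerall. }
  have := HP1 x Hx; rewrite {1}/Bf (Hc _ (SymM_HS Hx Hx)).
  by rewrite pmulr_lge0.
Qed.
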